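(* Let $p\ge3$ be real and $k_p=[(p+1)/2]$ (integer part). Then $$\sum_{k=1}^{k_p}\binom pk\mathrm B(k,p-k)\le4\log p.$$ More generally, for every $a>1$ there is a constant $0<C_a<\infty$ depending only on $a$ such that for all $p\ge3$, $$\sum_{k=1}^{k_p}\binom pk\mathrm B(ak,a(p-k))\le C_a(ap)^{1-a},\qquad\sum_{k=0}^{k_p-1}\binom{p-2}{k}\mathrm B(a(k+1),a(p-k-1))\le C_a(ap)^{-a}.$$
   Context: $\mathrm B(x,y)=\int_0^1t^{x-1}(1-t)^{y-1}dt$ is the beta function. For real $p$ and integer $k\ge1$, $\binom pk=\frac{p(p-1)\cdots(p-k+1)}{k!}$, and $\binom p0=1$. *)

(* Defs.v *)
From Stdlib Require Import Reals Lra ClassicalEpsilon Factorial.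
Open Scope R_scope.

(* Real power t^s for t >= 0, s >= 0, with the convention 0^0 = 1 and
   0^s = 0 for s > 0 (Rpower alone is wrong at t = 0). *)
Definition rpow (t s : R) : R :=
  if Req_EM_T t 0 then (if Req_EM_T s 0 then 1 else 0) else Rpower t s.

Definition beta_integrand (x y : R) (t : R) : R :=
  rpow t (x - 1) * rpow (1 - t) (y - 1).

(* Beta x y = Riemann integral over [0,1] of t^(x-1) (1-t)^(y-1),
   whenever that integrand is Riemann integrable (the case x,y >= 1
   used below, where it is continuous on [0,1]). *)
Definition Beta (x y : R) : R :=
  epsilon (inhabits 0)
    (fun l => exists pr : Riemann_integrable (beta_integrand x y) 0 1,
              RiemannInt pr = l).

Fixpoint falling (p : R) (k : nat) : R :=
  match k with
  | O => 1
  | S k' => falling p k' * (p - INR k')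
  end.

Definition binomR (p : R) (k : nat) : R := falling p k / INR (Factorial.fact k).

Definition kp (p : R) : nat := Z.to_nat (Int_part ((p + 1) / 2)).

(* Main.v *)
Require Import Defs.
From Stdlib Require Import Reals Lra Lia ClassicalEpsilon Factorial ZArith.
Open Scope R_scope.

Lemma exp_le_mono x y : x <= y -> exp x <= exp y.
Proof. intros [H|H]; [left; apply exp_increasing; auto | right; subst; auto]. Qed.

Lemma ln_le_mono x y : 0 < x -> x <= y -> ln x <= ln y.
Proof. intros Hx [H|H]; [left; apply ln_increasing; auto| right; subst; auto]. Qed.

Lemma ln_le_sub1 x : 0 < x -> ln x <= x - 1.
Proof. intros Hx. pose proof (exp_ineq1_le (ln x)) as H. rewrite exp_ln in H; lra. Qed.

Lemma ln_div x y : 0<x -> 0<y -> ln (x/y) = ln x - ln y.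
Proof. intros. unfold Rdiv. rewrite ln_mult, ln_Rinv; try lra. apply Rinv_0_lt_compat; auto. Qed.

Definition pw (s t : R) : R :=
  if Rlt_dec 0 t then Rpower t s else if Req_EM_T s 0 then 1 else 0.

Lemma pw_pos s t : 0 < t -> pw s t = Rpower t s.
Proof. intros H; unfold pw; destruct (Rlt_dec 0 t); [auto|lra]. Qed.

Lemma pw_nonpos s t : t <= 0 -> s <> 0 -> pw s t = 0.
Proof. intros H Hs; unfold pw; destruct (Rlt_dec 0 t); [lra|].
  destruct (Req_EM_T s 0); [lra|auto]. Qed.

Lemma pw_zero_exp t : pw 0 t = 1.
Proof. unfold pw; destruct (Rlt_dec 0 t).
  - unfold Rpower; rewrite Rmult_0_l, exp_0; auto.
  - destruct (Req_EM_T 0 0); [auto|lra]. Qed.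

Lemma pw_rpow s t : 0 <= t -> pw s t = rpow t s.
Proof. intros H. unfold pw, rpow. destruct (Rlt_dec 0 t); destruct (Req_EM_T t 0); try lra; reflexivity. Qed.

Lemma pw_cont0 s : 0 < s -> continuity_pt (pw s) 0.
Proof.
  intros Hs. unfold continuity_pt, continue_in, limit1_in, limit_in.
  intros eps Heps.
  exists (Rpower eps (/ s)). split. { unfold Rpower; apply exp_pos. }
  intros x [_ Hx]. simpl in *. unfold Rdist in *.
  rewrite (pw_nonpos s 0) by lra. rewrite Rminus_0_r in *.
  destruct (Rlt_dec 0 x) as [Hx0|Hx0].
  - rewrite pw_pos by auto. rewrite Rabs_right by (left; unfold Rpower; apply exp_pos).
    rewrite Rabs_right in Hx by lra.
    replace eps with (Rpower (Rpower eps (/s)) s).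
    + apply Rlt_Rpower_l; auto.
    + rewrite Rpower_mult. rewrite Rinv_l by lra. apply Rpower_1; auto.
  - rewrite pw_nonpos by lra. rewrite Rabs_R0; auto.
Qed.

Lemma pw_cont s : 0 <= s -> forall x, continuity_pt (pw s) x.
Proof.
  intros Hs x. destruct (Req_EM_T s 0) as [->|Hs0].
  - apply continuity_pt_locally_ext with (f := fct_cte 1) (a := 1); [lra| |].
    + intros; unfold fct_cte; rewrite pw_zero_exp; auto.
    + apply continuity_pt_const; unfold constant, fct_cte; auto.
  - destruct (Rtotal_order x 0) as [Hx|[Hx|Hx]].
    + apply continuity_pt_locally_ext with (f := fct_cte 0) (a := -x); [lra| |].
      * intros y Hy. unfold Rdist in Hy. apply Rabs_def2 in Hy. unfold fct_cte.
        rewrite pw_nonpos; lra.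
      * apply continuity_pt_const; unfold constant, fct_cte; auto.
    + subst; apply pw_cont0; lra.
    + apply continuity_pt_locally_ext with (f := fun t => Rpower t s) (a := x); [lra| |].
      * intros y Hy. unfold Rdist in Hy. apply Rabs_def2 in Hy. rewrite pw_pos; lra.
      * apply derivable_continuous_pt. exists (s * Rpower x (s-1)). apply derivable_pt_lim_power; auto.
Qed.

Lemma pw_mul s t : 0 < s -> pw (s+1) t = t * pw s t.
Proof. intros Hs. destruct (Rlt_dec 0 t).
 - rewrite !pw_pos by auto. rewrite Rpower_plus, Rpower_1 by auto; ring.
 - rewrite !pw_nonpos by lra. ring.
Qed.

Lemma pw_deriv s : 0 < s -> forall x, derivable_pt_lim (pw (s+1)) x ((s+1) * pw s x).
Proof.
  intros Hs x. destruct (Rtotal_order x 0) as [Hx|[Hx|Hx]].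
  - rewrite (pw_nonpos s x) by lra. rewrite Rmult_0_r.
    apply derivable_pt_lim_locally_ext with (f := fct_cte 0) (a := x - 1) (b := 0). lra.
    intros z Hz. unfold fct_cte. rewrite pw_nonpos; lra.
    apply derivable_pt_lim_const.
  - subst x. rewrite (pw_nonpos s 0) by lra. rewrite Rmult_0_r.
    intros eps Heps. destruct (pw_cont0 s Hs eps Heps) as [alp [Halp H]].
    exists (mkposreal alp Halp). intros h Hh Hha.
    rewrite Rplus_0_l, pw_mul by auto. rewrite (pw_nonpos (s+1) 0) by lra.
    replace ((h * pw s h - 0)/h - 0) with (pw s h - 0) by (field; auto).
    specialize (H h). simpl in H. unfold Rdist in H. rewrite (pw_nonpos s 0) in H by lra.
    apply H. split. { unfold D_x, no_cond. split; auto. }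
    rewrite Rminus_0_r; auto.
  - apply derivable_pt_lim_locally_ext with (f := fun t => Rpower t (s+1)) (a := 0) (b := x+1). lra.
    { intros; rewrite pw_pos; lra. }
    rewrite pw_pos by auto. replace (Rpower x s) with (Rpower x (s+1-1)) by (f_equal; ring).
    apply derivable_pt_lim_power; auto.
Qed.

Definition Q (y u : R) : R := if Req_EM_T y 1 then u else pw y u.

Lemma Q_deriv y : 1 <= y -> forall u, derivable_pt_lim (Q y) u (y * pw (y-1) u).
Proof.
  intros Hy u. unfold Q. destruct (Req_EM_T y 1) as [->|Hy1].
  - replace (1-1) with 0 by ring. rewrite pw_zero_exp, Rmult_1_r. apply derivable_pt_lim_id.
  - pose proof (pw_deriv (y-1) ltac:(lra) u) as H. replace (y-1+1) with y in H by ring. exact H.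
Qed.

Lemma Q_pw y u : 1 <= y -> 0 <= u -> Q y u = pw y u.
Proof. intros Hy Hu. unfold Q. destruct (Req_EM_T y 1) as [->|]; auto.
  destruct Hu as [Hu|<-]. rewrite pw_pos, Rpower_1; auto. rewrite pw_nonpos; lra. Qed.

Lemma Q_cont y : 1 <= y -> forall u, continuity_pt (Q y) u.
Proof. intros Hy u. apply derivable_continuous_pt. exists (y * pw (y-1) u). apply Q_deriv; auto. Qed.

Lemma dl_1mt t : derivable_pt_lim (fun t => 1 - t) t (-1).
Proof. replace (-1) with (0-1) by ring.
  apply (derivable_pt_lim_minus (fct_cte 1) id); [apply derivable_pt_lim_const | apply derivable_pt_lim_id]. Qed.

Lemma cont_1mt t : continuity_pt (fun t => 1 - t) t.
Proof. apply derivable_continuous_pt. exists (-1). apply dl_1mt. Qed.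

Lemma cont_comp1 (h : R -> R) : (forall u, continuity_pt h u) -> forall t, continuity_pt (fun t => h (1 - t)) t.
Proof. intros H t. apply (continuity_pt_comp (fun t => 1 - t) h). apply cont_1mt. apply H. Qed.

Definition g (x y t : R) := pw (x-1) t * pw (y-1) (1-t).

Lemma g_cont x y : 1<=x -> 1<=y -> forall t, continuity_pt (g x y) t.
Proof. intros Hx Hy t. unfold g.
  apply (continuity_pt_mult (pw (x-1)) (fun t => pw (y-1) (1-t))).
  apply pw_cont; lra. apply cont_comp1. apply pw_cont; lra. Qed.

Lemma g_int x y : 1<=x -> 1<=y -> Riemann_integrable (g x y) 0 1.
Proof. intros; apply continuity_implies_RiemannInt; [lra| intros; apply g_cont; auto]. Qed.

Lemma pw_one s : pw s 1 = 1.
Proof. rewrite pw_pos by lra. unfold Rpower. rewrite ln_1, Rmult_0_r, exp_0; auto. Qed.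

Lemma Beta_eq x y (hx: 1<=x) (hy:1<=y) (pr: Riemann_integrable (g x y) 0 1) : Beta x y = RiemannInt pr.
Proof.
  assert (Hb : Riemann_integrable (beta_integrand x y) 0 1).
  { apply Riemann_integrable_ext with (f := g x y); auto.
    intros t Ht. rewrite Rmin_left, Rmax_right in Ht by lra. unfold g, beta_integrand.
    rewrite !pw_rpow by lra. reflexivity. }
  unfold Beta.
  destruct (epsilon_spec (inhabits 0) (fun l => exists pr, RiemannInt pr = l)
     (ex_intro _ (RiemannInt Hb) (ex_intro _ Hb eq_refl))) as [pr' Hpr'].
  rewrite <- Hpr'. apply RiemannInt_P18; [lra|]. intros t Ht. unfold g, beta_integrand.
  rewrite !pw_rpow by lra. reflexivity.
Qed.

Lemma RI_scal f c (pr : Riemann_integrable f 0 1) (prc : Riemann_integrable (fun t => c * f t) 0 1) :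
  RiemannInt prc = c * RiemannInt pr.
Proof.
  pose (pr0 := RiemannInt_P14 0 1 0).
  pose (pr3 := RiemannInt_P10 c pr0 pr).
  rewrite (RiemannInt_P18 prc pr3); [| lra | intros; unfold fct_cte; ring].
  rewrite (RiemannInt_P13 pr0 pr pr3). rewrite RiemannInt_P15. ring.
Qed.

Lemma Beta_lin x1 y1 x2 y2 c1 c2 f (pr: Riemann_integrable f 0 1) :
  1<=x1 -> 1<=y1 -> 1<=x2 -> 1<=y2 ->
  (forall t, 0<t<1 -> f t = c1 * g x1 y1 t + c2 * g x2 y2 t) ->
  RiemannInt pr = c1 * Beta x1 y1 + c2 * Beta x2 y2.
Proof.
  intros H H0 H1 H2 Hf. pose (p1 := g_int x1 y1 H H0). pose (p2 := g_int x2 y2 H1 H2).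
  pose (p1c := @Riemann_integrable_scal _ 0 1 c1 p1).
  pose (p3 := RiemannInt_P10 c2 p1c p2).
  rewrite (RiemannInt_P18 pr p3); [| lra | auto].
  rewrite (RiemannInt_P13 p1c p2 p3), (RI_scal _ _ p1 p1c), <- (Beta_eq _ _ H H0 p1), <- (Beta_eq _ _ H1 H2 p2). ring.
Qed.

Lemma FTC_gen f F a b (h: a<=b) (cf: forall x, a<=x<=b -> continuity_pt f x)
  (dF: forall x, a<=x<=b -> derivable_pt_lim F x (f x)) (pr: Riemann_integrable f a b) :
  RiemannInt pr = F b - F a.
Proof.
  rewrite (RiemannInt_P20 h (FTC_P1 h cf) pr).
  assert (H1 := RiemannInt_P29 h cf).
  assert (H2 : antiderivative f F a b).
  { split; auto. intros x Hx. exists (exist _ (f x) (dF x Hx)).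
    symmetry; apply derive_pt_eq_0; auto. }
  destruct (antiderivative_Ucte _ _ _ _ _ H1 H2) as [C HC].
  rewrite !HC; [ring | lra | lra].
Qed.

Lemma Beta_1 y : 1 <= y -> Beta 1 y = 1/y.
Proof.
  intros Hy.
  set (D := fun t => (y * pw (y-1) (1-t)) * (-1)).
  assert (HD: forall t, derivable_pt_lim (fun t => Q y (1-t)) t (D t)).
  { intros t. unfold D. apply (derivable_pt_lim_comp (fun t => 1-t) (Q y) t (-1) (y * pw (y-1) (1-t))).
    apply dl_1mt. apply Q_deriv; lra. }
  assert (HC : forall t, continuity_pt D t).
  { intros t. unfold D. apply (continuity_pt_mult (fun t => y * pw (y-1) (1-t)) (fct_cte (-1))).
    apply (continuity_pt_scal (fun t => pw (y-1) (1-t))). apply cont_comp1, pw_cont; lra.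
    apply continuity_pt_const; unfold constant, fct_cte; auto. }
  pose (pr := @continuity_implies_RiemannInt D 0 1 ltac:(lra) (fun x _ => HC x)).
  pose proof (FTC_gen D (fun t => Q y (1-t)) 0 1 ltac:(lra) (fun x _ => HC x) (fun x _ => HD x) pr) as H.
  rewrite (Beta_lin 1 y 1 y (-y) 0 D pr) in H; try lra.
  - replace (1-1) with 0 in H by ring. replace (1-0) with 1 in H by ring.
    rewrite !Q_pw in H by lra. rewrite pw_nonpos in H by lra.
    rewrite pw_one in H.
    assert (y * Beta 1 y = 1) by lra. field_simplify_eq; lra.
  - intros t Ht. unfold D, g. replace (1-1) with 0 by ring. rewrite pw_zero_exp. ring.
Qed.

Lemma Beta_split x y : 1<=x -> 1<=y -> Beta x y = Beta (x+1) y + Beta x (y+1).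
Proof.
  intros Hx Hy. rewrite (Beta_eq x y Hx Hy (g_int x y Hx Hy)).
  rewrite (Beta_lin (x+1) y x (y+1) 1 1 (g x y)); try lra.
  intros t Ht. unfold g. rewrite !pw_pos by lra.
  replace (x+1-1) with ((x-1)+1) by ring. replace (y+1-1) with ((y-1)+1) by ring.
  rewrite !Rpower_plus, !Rpower_1 by lra. ring.
Qed.

Lemma Beta_ibp x y : 1<=x -> 1<=y -> x * Beta x (y+1) = y * Beta (x+1) y.
Proof.
  intros Hx Hy.
  set (D := fun t => x * pw (x-1) t * Q y (1-t) + Q x t * (y * pw (y-1) (1-t) * -1)).
  assert (HD: forall t, derivable_pt_lim (fun t => Q x t * Q y (1-t)) t (D t)).
  { intros t. unfold D.
    pose proof (derivable_pt_lim_mult (Q x) (fun t => Q y (1-t)) t _ _ (Q_deriv x Hx t)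
      (derivable_pt_lim_comp (fun t => 1-t) (Q y) t (-1) (y * pw (y-1) (1-t)) (dl_1mt t) (Q_deriv y Hy (1-t)))) as H.
    exact H. }
  assert (HC : forall t, continuity_pt D t).
  { intros t. unfold D.
    apply (continuity_pt_plus (fun t => x * pw (x-1) t * Q y (1-t)) (fun t => Q x t * (y * pw (y-1) (1-t) * -1))).
    - apply (continuity_pt_mult (fun t => x * pw (x-1) t) (fun t => Q y (1-t))).
      + apply (continuity_pt_scal (pw (x-1))). apply pw_cont; lra.
      + apply cont_comp1, Q_cont; lra.
    - apply (continuity_pt_mult (Q x) (fun t => y * pw (y-1) (1-t) * -1)).
      + apply Q_cont; lra.
      + apply (continuity_pt_mult (fun t => y * pw (y-1) (1-t)) (fct_cte (-1))).
        * apply (continuity_pt_scal (fun t => pw (y-1) (1-t))). apply cont_comp1, pw_cont; lra.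
        * apply continuity_pt_const; unfold constant, fct_cte; auto. }
  pose (pr := @continuity_implies_RiemannInt D 0 1 ltac:(lra) (fun x _ => HC x)).
  pose proof (FTC_gen D (fun t => Q x t * Q y (1-t)) 0 1 ltac:(lra) (fun x _ => HC x) (fun x _ => HD x) pr) as H.
  rewrite (Beta_lin x (y+1) (x+1) y x (-y) D pr) in H; try lra.
  - replace (1-1) with 0 in H by ring. replace (1-0) with 1 in H by ring.
    rewrite !Q_pw in H by lra. rewrite !(pw_nonpos _ 0) in H by lra. lra.
  - intros t Ht. unfold D, g. rewrite !Q_pw by lra. rewrite !pw_pos by lra.
    replace (x+1-1) with x by ring. replace (y+1-1) with y by ring. ring.
Qed.

Lemma Beta_rec x y : 1<=x -> 1<=y -> Beta (x+1) y = x/(x+y) * Beta x y.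
Proof.
  intros Hx Hy. pose proof (Beta_split x y Hx Hy). pose proof (Beta_ibp x y Hx Hy).
  apply (Rmult_eq_reg_l (x+y)); [|lra]. field_simplify; [|lra].
  replace (Beta x (y+1)) with (Beta x y - Beta (x+1) y) in H0 by lra. nra.
Qed.

Lemma falling_succ z k : falling (z+1) (S k) = (z+1) * falling z k.
Proof.
  induction k.
  - simpl. ring.
  - change (falling (z+1) (S (S k))) with (falling (z+1) (S k) * (z + 1 - INR (S k))).
    rewrite IHk. change (falling z (S k)) with (falling z k * (z - INR k)).
    rewrite S_INR. ring.
Qed.

Lemma binomR_succ z k : binomR (z+1) (S k) = (z+1) / INR (S k) * binomR z k.
Proof.
  unfold binomR. rewrite falling_succ. change (fact (S k)) with ((S k) * fact k)%nat.
  rewrite mult_INR. field. split; [apply INR_fact_neq_0 | apply not_0_INR; lia].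
Qed.

Lemma F1 n y : 1 <= y -> binomR (y + INR (S n)) (S n) * Beta (INR (S n)) y = (y + INR (S n)) / (INR (S n) * y).
Proof.
  revert y. induction n; intros y Hy.
  - simpl INR. unfold binomR. simpl. rewrite Beta_1 by lra. field. lra.
  - replace (y + INR (S (S n))) with ((y + INR (S n)) + 1) by (rewrite (S_INR (S n)); ring).
    rewrite binomR_succ. rewrite (S_INR (S n)) at 2. rewrite Beta_rec; [| pose proof (pos_INR n); rewrite S_INR; lra | lra].
    pose proof (IHn y Hy) as H. pose proof (pos_INR n). rewrite !S_INR in *.
    replace ((y + (INR n + 1) + 1) / (INR n + 1 + 1) * binomR (y + (INR n + 1)) (S n) *
      ((INR n + 1) / (INR n + 1 + y) * Beta (INR n + 1) y))
      with ((y + (INR n + 1) + 1) / (INR n + 1 + 1) * ((INR n + 1) / (INR n + 1 + y)) *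
            (binomR (y + (INR n + 1)) (S n) * Beta (INR n + 1) y)) by ring.
    rewrite H. field. lra.
Qed.

Lemma F3 k y : 1 <= y -> binomR (y + INR k - 1) k * Beta (INR k + 1) y = 1 / (y + INR k).
Proof.
  revert y. induction k; intros y Hy.
  - simpl INR. unfold binomR. simpl. replace (0+1) with 1 by ring. rewrite Beta_1 by lra. field. lra.
  - pose proof (pos_INR k) as Hk0.
    replace (y + INR (S k) - 1) with ((y + INR k - 1) + 1) by (rewrite S_INR; ring).
    rewrite binomR_succ. rewrite Beta_rec; [| rewrite S_INR; lra | lra].
    pose proof (IHk y Hy) as H. rewrite S_INR in *.
    replace ((y + INR k - 1 + 1) / (INR k + 1) * binomR (y + INR k - 1) k *
      ((INR k + 1) / (INR k + 1 + y) * Beta (INR k + 1) y))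
      with ((y + INR k - 1 + 1) / (INR k + 1) * ((INR k + 1) / (INR k + 1 + y)) *
            (binomR (y + INR k - 1) k * Beta (INR k + 1) y)) by ring.
    rewrite H. field. lra.
Qed.

Lemma amgm x y t : 0<x -> 0<y -> 0<t<1 ->
  x*ln t + y*ln(1-t) <= x*ln(x/(x+y)) + y*ln(y/(x+y)).
Proof.
  intros Hx Hy Ht.
  pose proof (ln_le_sub1 (t*(x+y)/x) ltac:(apply Rdiv_lt_0_compat; nra)) as h1.
  pose proof (ln_le_sub1 ((1-t)*(x+y)/y) ltac:(apply Rdiv_lt_0_compat; nra)) as h2.
  rewrite ln_div, ln_mult in h1 by nra. rewrite ln_div, ln_mult in h2 by nra.
  rewrite !ln_div by lra.
  apply Rmult_le_compat_l with (r:=x) in h1; [|lra].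
  apply Rmult_le_compat_l with (r:=y) in h2; [|lra].
  replace (x * (t * (x + y) / x - 1)) with (t*(x+y) - x) in h1 by (field; lra).
  replace (y * ((1-t) * (x + y) / y - 1)) with ((1-t)*(x+y) - y) in h2 by (field; lra).
  nra.
Qed.

Lemma Beta_key a x y : 1 <= a -> 1<=x -> 1<=y ->
  Beta (a*x) (a*y) <= exp((a-1)*(x*ln(x/(x+y)) + y*ln(y/(x+y)))) * Beta x y.
Proof.
  intros Ha Hx Hy. set (E := exp _).
  assert (Hax : 1 <= a*x) by nra. assert (Hay : 1 <= a*y) by nra.
  rewrite (Beta_eq (a*x) (a*y) Hax Hay (g_int _ _ Hax Hay)).
  pose (p := g_int x y Hx Hy). pose (pE := @Riemann_integrable_scal _ 0 1 E p).
  rewrite (Beta_eq x y Hx Hy p), <- (RI_scal _ _ p pE).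
  apply RiemannInt_P19; [lra|]. intros t Ht. unfold g.
  rewrite !pw_pos by lra. unfold E, Rpower. rewrite <- !exp_plus. apply exp_le_mono.
  pose proof (amgm x y t ltac:(lra) ltac:(lra) Ht) as H.
  apply Rmult_le_compat_l with (r := a-1) in H; [|lra]. nra.
Qed.

Definition cc : R := ln (4/3) - 1/3.

Lemma cc_neg : cc < 0.
Proof.
  unfold cc. pose proof (exp_ineq1 (1/3) ltac:(lra)).
  assert (ln (4/3) < ln (exp (1/3))) by (apply ln_increasing; lra).
  rewrite ln_exp in H0. lra.
Qed.

Lemma INR_le_pow2 m : INR (S m) <= 2 ^ m.
Proof.
  induction m.
  - simpl; lra.
  - rewrite S_INR. change (2^(S m)) with (2 * 2^m). pose proof (pow_R1_Rle 2 m ltac:(lra)). lra.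
Qed.

Lemma ln_INR_le n : (1 <= n)%nat -> ln (INR n) <= (INR n - 1) * ln 2.
Proof.
  intros Hn. destruct n as [|m]; [lia|].
  pose proof (INR_le_pow2 m). pose proof (pos_INR m).
  apply Rle_trans with (ln (2^m)).
  - apply ln_le_mono; [rewrite S_INR; lra | auto].
  - rewrite ln_pow by lra. rewrite S_INR. right; ring.
Qed.

Lemma NL p (n:nat) x y : 3<=p -> (1<=n)%nat -> x = INR n -> x + y = p -> INR n <= (p+1)/2 ->
  x*ln(x/(x+y)) + y*ln(y/(x+y)) + ln p <= (x-1)*cc.
Proof.
  intros Hp Hn Hx Hxy HK. rewrite Hxy.
  assert (HK1 : 1 <= INR n) by (apply (le_INR 1); auto).
  assert (Hy : y = p - x) by lra. subst y.
  pose proof (ln_INR_le n Hn) as H3. rewrite <- Hx in H3.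
  assert (Hi : (p - x) * ln ((p-x)/p) <= - x/3).
  { pose proof (ln_le_sub1 ((p-x)/p) ltac:(apply Rdiv_lt_0_compat; lra)) as h.
    apply Rmult_le_compat_l with (r := p - x) in h; [|lra].
    apply Rle_trans with (1 := h).
    replace ((p - x) * ((p - x) / p - 1)) with (- ((p-x)*x) / p) by (field; lra).
    apply Rmult_le_reg_r with p; [lra|]. unfold Rdiv. rewrite Rmult_assoc, Rinv_l by lra. nra. }
  assert (Hii : ln (x/p) <= ln (2/3)).
  { apply ln_le_mono. apply Rdiv_lt_0_compat; lra.
    apply Rmult_le_reg_r with p; [lra|]. unfold Rdiv. rewrite Rmult_assoc, Rinv_l by lra. lra. }
  rewrite ln_div in Hii by lra.
  rewrite ln_div by lra.
  assert (H43 : ln (4/3) = ln 2 + ln (2/3)).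
  { rewrite <- ln_mult by lra. f_equal. field. }
  unfold cc. rewrite H43.
  apply Rmult_le_compat_l with (r := x - 1) in Hii; [|lra].
  nra.
Qed.

Lemma exp_pow_nat x n : exp x ^ n = exp (INR n * x).
Proof.
  induction n.
  - simpl. rewrite Rmult_0_l, exp_0; auto.
  - rewrite S_INR. simpl. rewrite IHn. rewrite <- exp_plus. f_equal. ring.
Qed.

Lemma falling_pos q k : INR k - 1 < q -> 0 < falling q k.
Proof.
  induction k; intros H.
  - simpl; lra.
  - simpl falling. rewrite S_INR in H. pose proof (pos_INR k).
    apply Rmult_lt_0_compat; [apply IHk; lra | lra].
Qed.

Lemma binomR_nonneg q k : INR k - 1 < q -> 0 <= binomR q k.
Proof.
  intros H. unfold binomR. left. apply Rdiv_lt_0_compat; [apply falling_pos; auto|].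
  apply lt_0_INR. apply lt_O_fact.
Qed.

Lemma kp_props p : 3 <= p -> (1 <= kp p)%nat /\ INR (kp p) <= (p+1)/2.
Proof.
  intros Hp. unfold kp. destruct (base_Int_part ((p+1)/2)) as [H1 H2].
  set (z := Int_part ((p+1)/2)) in *.
  assert (Hz : (1 <= z)%Z).
  { destruct (Z_lt_le_dec z 1) as [h|h]; auto.
    assert (z <= 0)%Z by lia. apply IZR_le in H. lra. }
  rewrite INR_IZR_INZ, Z2Nat.id by lia. split; [lia | auto].
Qed.

Lemma term2 p a k : 3 <= p -> 1 < a -> (1 <= k)%nat -> (k <= kp p)%nat ->
  binomR p k * Beta (a * INR k) (a * (p - INR k)) <= 3 * Rpower p (1-a) * exp((a-1)*cc) ^ (k-1).
Proof.
  intros Hp Ha Hk1 Hk2. destruct (kp_props p Hp) as [_ Hkp].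
  assert (HK : INR k <= (p+1)/2) by (apply le_INR in Hk2; lra).
  assert (HK1 : 1 <= INR k) by (apply (le_INR 1); auto).
  assert (Hy : 1 <= p - INR k) by lra.
  pose proof (Beta_key a (INR k) (p - INR k) ltac:(lra) HK1 Hy) as HB.
  pose proof (binomR_nonneg p k ltac:(lra)) as Hb.
  assert (HF : binomR p k * Beta (INR k) (p - INR k) = p / (INR k * (p - INR k))).
  { destruct k as [|n]; [lia|]. pose proof (F1 n (p - INR (S n)) Hy) as H.
    replace (p - INR (S n) + INR (S n)) with p in H by ring. exact H. }
  set (L := INR k * ln (INR k / (INR k + (p - INR k))) + (p - INR k) * ln ((p - INR k) / (INR k + (p - INR k)))) in *.
  assert (HE : exp ((a-1)*L) <= Rpower p (1-a) * exp((a-1)*cc) ^ (k-1)).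
  { rewrite exp_pow_nat. unfold Rpower. rewrite <- exp_plus. apply exp_le_mono.
    pose proof (NL p k (INR k) (p - INR k) Hp Hk1 eq_refl ltac:(ring) HK) as N.
    fold L in N. rewrite minus_INR by lia. change (INR 1) with 1.
    apply Rmult_le_compat_l with (r := a-1) in N; [|lra]. nra. }
  assert (Hq : p / (INR k * (p - INR k)) <= 3).
  { apply Rmult_le_reg_r with (INR k * (p - INR k)); [nra|].
    unfold Rdiv. rewrite Rmult_assoc, Rinv_l by nra. nra. }
  apply Rle_trans with (binomR p k * (exp ((a-1)*L) * Beta (INR k) (p - INR k))).
  { apply Rmult_le_compat_l; auto. }
  replace (binomR p k * (exp ((a-1)*L) * Beta (INR k) (p - INR k)))
    with (exp ((a-1)*L) * (binomR p k * Beta (INR k) (p - INR k))) by ring.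
  rewrite HF.
  assert (0 <= p / (INR k * (p - INR k))) by (apply Rlt_le, Rdiv_lt_0_compat; nra).
  pose proof (exp_pos ((a-1)*L)).
  apply Rle_trans with ((Rpower p (1 - a) * exp ((a - 1) * cc) ^ (k - 1)) * 3).
  - apply Rmult_le_compat; lra.
  - right; ring.
Qed.

Lemma term3 p a k : 3 <= p -> 1 < a -> (S k <= kp p)%nat ->
  binomR (p-2) k * Beta (a * (INR k + 1)) (a * (p - INR k - 1)) <= 3/2 * Rpower p (-a) * exp((a-1)*cc) ^ k.
Proof.
  intros Hp Ha Hk2. destruct (kp_props p Hp) as [_ Hkp].
  assert (HK : INR (S k) <= (p+1)/2) by (apply le_INR in Hk2; lra).
  rewrite S_INR in HK. pose proof (pos_INR k) as Hk0.
  assert (Hy : 1 <= p - INR k - 1) by lra.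
  pose proof (Beta_key a (INR k + 1) (p - INR k - 1) ltac:(lra) ltac:(lra) Hy) as HB.
  pose proof (binomR_nonneg (p-2) k ltac:(lra)) as Hb.
  assert (HF : binomR (p-2) k * Beta (INR k + 1) (p - INR k - 1) = 1 / (p - 1)).
  { pose proof (F3 k (p - INR k - 1) Hy) as H.
    replace (p - INR k - 1 + INR k - 1) with (p-2) in H by ring.
    replace (p - INR k - 1 + INR k) with (p-1) in H by ring. exact H. }
  set (L := (INR k + 1) * ln ((INR k + 1) / (INR k + 1 + (p - INR k - 1))) + (p - INR k - 1) * ln ((p - INR k - 1) / (INR k + 1 + (p - INR k - 1)))) in *.
  assert (HE : exp ((a-1)*L) <= p * Rpower p (-a) * exp((a-1)*cc) ^ k).
  { rewrite exp_pow_nat. replace (p * Rpower p (-a)) with (Rpower p (1-a)).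
    2:{ replace (1-a) with (1 + -a) by ring. rewrite Rpower_plus, Rpower_1 by lra. ring. }
    unfold Rpower. rewrite <- exp_plus. apply exp_le_mono.
    pose proof (NL p (S k) (INR k + 1) (p - INR k - 1) Hp ltac:(lia) ltac:(rewrite S_INR; ring) ltac:(ring) ltac:(rewrite S_INR; lra)) as N.
    fold L in N.
    apply Rmult_le_compat_l with (r := a-1) in N; [|lra]. nra. }
  apply Rle_trans with (binomR (p-2) k * (exp ((a-1)*L) * Beta (INR k + 1) (p - INR k - 1))).
  { apply Rmult_le_compat_l; auto. }
  replace (binomR (p-2) k * (exp ((a-1)*L) * Beta (INR k + 1) (p - INR k - 1)))
    with (exp ((a-1)*L) * (binomR (p-2) k * Beta (INR k + 1) (p - INR k - 1))) by ring.
  rewrite HF.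
  assert (HP : 0 < Rpower p (-a) * exp ((a - 1) * cc) ^ k).
  { apply Rmult_lt_0_compat; [apply exp_pos| apply pow_lt, exp_pos]. }
  apply Rle_trans with ((p * Rpower p (-a) * exp ((a - 1) * cc) ^ k) * (1/(p-1))).
  - apply Rmult_le_compat_r; [apply Rlt_le, Rdiv_lt_0_compat; lra | auto].
  - replace (p * Rpower p (- a) * exp ((a - 1) * cc) ^ k * (1 / (p - 1)))
      with ((Rpower p (- a) * exp ((a - 1) * cc) ^ k) * (p / (p-1))) by (field; lra).
    replace (3 / 2 * Rpower p (- a) * exp ((a - 1) * cc) ^ k) with
      ((Rpower p (- a) * exp ((a - 1) * cc) ^ k) * (3/2)) by ring.
    apply Rmult_le_compat_l; [lra|].
    apply Rmult_le_reg_r with (p-1); [lra|]. unfold Rdiv. rewrite Rmult_assoc, Rinv_l by lra. lra.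
Qed.

Lemma geom_sum C r N : r <> 1 -> sum_f_R0 (fun n => C * r^n) N = C * (1 - r^(S N)) / (1 - r).
Proof.
  intros Hr. induction N.
  - simpl. field. lra.
  - rewrite tech5, IHN. change (r ^ S (S N)) with (r * r ^ S N). change (r ^ S N) with (r * r ^ N). field. lra.
Qed.

Lemma geom_bound C r N : 0 <= r < 1 -> 0 <= C -> sum_f_R0 (fun n => C * r^n) N <= C / (1 - r).
Proof.
  intros Hr HC. rewrite geom_sum by lra. pose proof (pow_le r (S N) ltac:(lra)).
  unfold Rdiv. apply Rmult_le_compat_r. apply Rlt_le, Rinv_0_lt_compat; lra. nra.
Qed.

Lemma harm N : sum_f_R0 (fun n => 1 / INR (S n)) N <= 1 + ln (INR (S N)).
Proof.
  induction N.
  - simpl. rewrite ln_1. lra.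
  - rewrite tech5. set (m := INR (S N)) in *.
    assert (Hm : 1 <= m) by (unfold m; rewrite S_INR; pose proof (pos_INR N); lra).
    replace (INR (S (S N))) with (m+1) by (unfold m; rewrite (S_INR (S N)); ring).
    pose proof (ln_le_sub1 (m/(m+1)) ltac:(apply Rdiv_lt_0_compat; lra)) as h.
    rewrite ln_div in h by lra.
    replace (m/(m+1) - 1) with (- (1/(m+1))) in h by (field; lra). lra.
Qed.

Theorem lemma3p3 :
  (forall p : R, 3 <= p ->
     sum_f 1 (kp p) (fun k => binomR p k * Beta (INR k) (p - INR k)) <= 4 * ln p)
  /\
  (forall a : R, 1 < a ->
     exists Ca : R, 0 < Ca /\
       forall p : R, 3 <= p ->
         sum_f 1 (kp p)
           (fun k => binomR p k * Beta (a * INR k) (a * (p - INR k)))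
           <= Ca * Rpower (a * p) (1 - a)
         /\
         sum_f_R0
           (fun k => binomR (p - 2) k * Beta (a * (INR k + 1)) (a * (p - INR k - 1)))
           (kp p - 1)
           <= Ca * Rpower (a * p) (- a)).
Proof.
  split.
  - intros p Hp. destruct (kp_props p Hp) as [Hk1 Hkp]. unfold sum_f.
    apply Rle_trans with (sum_f_R0 (fun n => 1 / INR (S n) + 2 / (p-1)) (kp p - 1)).
    { apply sum_Rle. intros n Hn.
      replace (n + 1)%nat with (S n) by lia.
      assert (HK : INR (S n) <= (p+1)/2) by (apply Rle_trans with (INR (kp p)); [apply le_INR; lia| auto]).
      assert (HK1 : 1 <= INR (S n)) by (rewrite S_INR; pose proof (pos_INR n); lra).
      assert (Hy : 1 <= p - INR (S n)) by lra.
      pose proof (F1 n (p - INR (S n)) Hy) as H.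
      replace (p - INR (S n) + INR (S n)) with p in H by ring. rewrite H.
      replace (p / (INR (S n) * (p - INR (S n)))) with (1 / INR (S n) + 1/(p - INR (S n))) by (field; lra).
      apply Rplus_le_compat_l.
      apply Rmult_le_reg_r with ((p - INR (S n)) * (p-1)); [nra|].
      field_simplify; lra. }
    rewrite sum_plus, sum_cte. pose proof (harm (kp p - 1)) as H.
    replace (S (kp p - 1)) with (kp p) in * by lia.
    assert (Hl1 : ln (INR (kp p)) <= ln p) by (apply ln_le_mono; [apply (lt_INR 0); lia| lra]).
    assert (Hl2 : 1 <= ln p).
    { rewrite <- (ln_exp 1). apply ln_le_mono. apply exp_pos. pose proof exp_le_3. lra. }
    assert (H2 : 2 / (p-1) * INR (kp p) <= 2).
    { apply Rmult_le_reg_r with (p-1); [lra|]. replace (2 / (p-1) * INR (kp p) * (p-1)) with (2 * INR (kp p)) by (field; lra). lra. }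
    lra.
  - intros a Ha. set (r := exp ((a-1)*cc)).
    assert (Hr : 0 <= r < 1).
    { split. left; apply exp_pos. unfold r. apply Rlt_le_trans with (exp 0); [apply exp_increasing | rewrite exp_0; lra].
      pose proof cc_neg. nra. }
    assert (HA : 0 < Rpower a a) by apply exp_pos.
    exists (3 * Rpower a a / (1 - r)). split.
    { apply Rdiv_lt_0_compat; lra. }
    intros p Hp. destruct (kp_props p Hp) as [Hk1 Hkp]. split.
    + unfold sum_f.
      apply Rle_trans with (sum_f_R0 (fun n => (3 * Rpower p (1-a)) * r^n) (kp p - 1)).
      { apply sum_Rle. intros n Hn.
        pose proof (term2 p a (n+1) Hp Ha ltac:(lia) ltac:(lia)) as H.
        replace (n + 1 - 1)%nat with n in H by lia. exact H. }
      assert (HP : 0 < Rpower p (1-a)) by apply exp_pos.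
      apply Rle_trans with ((3 * Rpower p (1-a)) / (1 - r)).
      { apply geom_bound; lra. }
      rewrite <- Rpower_mult_distr by lra.
      replace (3 * Rpower a a / (1 - r) * (Rpower a (1 - a) * Rpower p (1 - a)))
        with ((3 * Rpower p (1-a)) / (1 - r) * (Rpower a a * Rpower a (1-a))) by (field; lra).
      rewrite <- Rpower_plus. replace (a + (1-a)) with 1 by ring. rewrite Rpower_1 by lra.
      assert (0 <= 3 * Rpower p (1-a) / (1-r)) by (apply Rlt_le, Rdiv_lt_0_compat; lra).
      nra.
    + apply Rle_trans with (sum_f_R0 (fun n => (3/2 * Rpower p (-a)) * r^n) (kp p - 1)).
      { apply sum_Rle. intros n Hn.
        apply term3; auto. lia. }
      assert (HP : 0 < Rpower p (-a)) by apply exp_pos.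
      apply Rle_trans with ((3/2 * Rpower p (-a)) / (1 - r)).
      { apply geom_bound; lra. }
      rewrite <- Rpower_mult_distr by lra.
      replace (3 * Rpower a a / (1 - r) * (Rpower a (- a) * Rpower p (- a)))
        with ((3 * Rpower p (-a)) / (1 - r) * (Rpower a a * Rpower a (-a))) by (field; lra).
      rewrite <- Rpower_plus. replace (a + (-a)) with 0 by ring. rewrite Rpower_O by lra.
      apply Rmult_le_reg_r with (1-r); [lra|]. field_simplify; lra.
Qed.
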